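(* Let $\mathbf k$ be a commutative ring with identity and $X$ a set, with $\Delta$ and $\mathcal N^{(n)}$ as in the context. Then for every $n\ge0$, $$\Delta(\mathcal N^{(n)})\subseteq\big(\mathcal N^{(0)}\otimes\mathcal N^{(n)}\big)\oplus\Big(\bigoplus_{p+q=n,\ p>0,\ q>0}\mathcal N^{(p)}\otimes\mathcal N^{(q)}\Big).$$
   Context: Let $M(X)$ be the free monoid on $X$ with identity $\mathbf 1$ and $S(X)=M(X)\setminus\{\mathbf 1\}$. For a set $Y$ write $\lfloor Y\rfloor=\{\lfloor y\rfloor: y\in Y\}$ for a disjoint copy of $Y$. Bracketed words: $\mathfrak M_0=M(X)$, $\mathfrak M_{n+1}=M(X\sqcup\lfloor\mathfrak M_n\rfloor)$, $\mathfrak M(X)=\bigcup_n\mathfrak M_n$ (monoid under concatenation); $\mathrm{dep}(w)$ is the least $n$ with $w\in\mathfrak M_n$; every $w\ne\mathbf 1$ has a unique standard decomposition $w=w_1\cdots w_m$ with factors alternately in $S(X)$ and $\lfloor\mathfrak M(X)\rfloor$ ($m$ = breadth). $\mathfrak X_0=M(X)$; for $n\ge1$, $\mathfrak X_n$ consists of $\mathbf 1$ and all words $w_1\cdots w_m$ ($m\ge1$) with factors alternately in $S(X)$ and $\lfloor\mathfrak X_{n-1}\rfloor$; $\mathfrak X_\infty=\bigcup_n\mathfrak X_n$. $\mathcal N(X)=\mathbf k\mathfrak X_\infty$ (free $\mathbf k$-module), $N_X(w)=\lfloor w\rfloor$ extended linearly (also written $\lfloor a\rfloor$). Product $\diamond$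 (bilinear, by induction on $\mathrm{dep}(w)+\mathrm{dep}(w')$): $\mathbf 1$ is the identity; for breadth-one $w,w'\ne\mathbf 1$: $w\diamond w'=ww'$ if one of them is in $S(X)$, and $\lfloor\bar w\rfloor\diamond\lfloor\bar w'\rfloor=\lfloor\lfloor\bar w\rfloor\diamond\bar w'\rfloor+\lfloor\bar w\diamond\lfloor\bar w'\rfloor\rfloor-\lfloor\lfloor\bar w\diamond\bar w'\rfloor\rfloor$; in general $w\diamond w'=w_1\cdots w_{m-1}(w_m\diamond w'_1)w'_2\cdots w'_{m'}$ for standard decompositions. $(\mathcal N(X),\diamond,N_X)$ is an associative unital algebra with identity $\mathbf 1$ and Nijenhuis operator $N_X$ (the free Nijenhuis algebra on $X$). A sequence $w_1,\dots,w_m$ in $\mathcal I:=X\sqcup\lfloor\mathfrak X_\infty\rfloor$ is alternating if for each $i$ at least one of $w_i,w_{i+1}$ lies in $X$. Every $w\in\mathfrak X_\infty\setminus\{\mathbf 1\}$ can be written uniquely as $w=w_1\diamond\cdots\diamond w_m$ (equal to the concatenation $w_1\cdots w_m$) with $w_1,\dots,w_m$ alternating in $\mathcal I$; $m=\mathrm{wid}(w)$ is the width, $\mathrm{wid}(\mathbf 1)=0$. $\mathcal N(X)\otimes\mathcal N(X)$ carries the product $(a\otimes b)\diamond(a'\otimes b')=(a\diamond a')\otimes(b\diamond b')$. The linear map $\Delta:\mathcal N(X)\to\mathcal N(X)\otimes\mathcal N(X)$ is defined on $\mathfrak X_\infty$ by induction on depth: $\Delta(\mathbf 1)=\mathbf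 1\otimes\mathbf 1$; $\Delta(x)=\mathbf 1\otimes x$ for $x\in X$; $\Delta(x_1\cdots x_m)=\Delta(x_1)\diamond\cdots\diamond\Delta(x_m)$ for $x_i\in X$, $m\ge2$; $\Delta(\lfloor\bar w\rfloor)=(\mathrm{id}\otimes N_X)\Delta(\bar w)$ for $\bar w\in\mathfrak X_\infty$; and if $w$ has $\diamond$-factorization $w=w_1\diamond\cdots\diamond w_m$ with $m\ge2$, $\Delta(w)=\Delta(w_1)\diamond\cdots\diamond\Delta(w_m)$. Grading: for $w\in\mathfrak X_\infty$, $\deg(w)=\deg_X(w)+\deg_N(w)$, where $\deg_X(w)$ is the number of occurrences of letters of $X$ in $w$ and $\deg_N(w)$ the number of occurrences of the bracket $\lfloor\ \rfloor$ (e.g. $\deg(\lfloor x\rfloor)=2$, $\deg(x\lfloor x\rfloor)=3$). Set $\mathcal N^{(n)}=\mathbf k\{w\in\mathfrak X_\infty:\deg(w)=n\}$; thus $\mathcal N(X)=\bigoplus_{n\ge0}\mathcal N^{(n)}$, $\mathcal N^{(0)}=\mathbf k\mathbf 1$, and $N_X(\mathcal N^{(n)})\subseteq\mathcal N^{(n+1)}$. *)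

(* Defs.v *)
From HB Require Import structures.
From mathcomp Require Import all_boot all_algebra.
From Stdlib Require Import ClassicalEpsilon.
Set Implicit Arguments. Unset Strict Implicit. Unset Printing Implicit Defensive.
Import GRing.Theory.
Local Open Scope ring_scope.

(* Bracketed words: a word is a list of letters; a letter is either a
   generator x \in X or a bracket |_ w _| of a word w. *)
Inductive letter (X : Type) : Type :=
| Lx of X
| Lb of seq (letter X).
Arguments Lx {X}. Arguments Lb {X}.

Definition word (X : Type) := seq (letter X).

Definition isLb {X} (l : letter X) : bool :=
  match l with Lb _ => true | Lx _ => false end.

Fixpoint noadj {X} (s : word X) : Prop :=
  match s with
  | l1 :: ((l2 :: _) as s') => ~~ (isLb l1 && isLb l2) /\ noadj s'
  | _ => True
  end.

Fixpoint wfL {X} (l : letter X) : Prop :=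
  match l with
  | Lx _ => True
  | Lb a => (fix ww (s : word X) : Prop :=
               match s with [::] => True | l' :: s' => wfL l' /\ ww s' end) a
            /\ noadj a
  end.
Fixpoint allwf {X} (s : word X) : Prop :=
  match s with [::] => True | l :: s' => wfL l /\ allwf s' end.
Definition wfW {X} (w : word X) : Prop := allwf w /\ noadj w.

Fixpoint degL {X} (l : letter X) : nat :=
  match l with
  | Lx _ => 1
  | Lb a => ((fix dw (s : word X) : nat :=
               match s with [::] => 0 | l' :: s' => degL l' + dw s' end) a).+1
  end.
Fixpoint degW {X} (w : word X) : nat :=
  match w with [::] => 0 | l :: s => degL l + degW s end.

(* Formal k-linear combinations (elements of the free module k T). *)
Definition fsum (k : Type) (T : Type) := seq (k * T).

Definition coeff {k : nmodType} {T : Type} (s : fsum k T) (t : T) : k :=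
  \sum_(p <- s) (if excluded_middle_informative (p.2 = t) then p.1 else 0).

Section Nijenhuis.
Variables (k : comPzRingType) (X : Type).

Definition brk (s : fsum k (word X)) : fsum k (word X) :=
  map (fun p => (p.1, [:: Lb p.2])) s.
Definition wrap (u v : word X) (s : fsum k (word X)) : fsum k (word X) :=
  map (fun p => (p.1, u ++ p.2 ++ v)) s.
Definition fneg (s : fsum k (word X)) : fsum k (word X) :=
  map (fun p => (- p.1, p.2)) s.

Fixpoint prodF (fuel : nat) (w w' : word X) : fsum k (word X) :=
  match fuel with
  | 0 => [:: (1, w ++ w')]
  | f.+1 =>
    match rev w, w' with
    | Lb a :: rw, Lb b :: t =>
        wrap (rev rw) t
          (brk (prodF f [:: Lb a] b) ++ brk (prodF f a [:: Lb b])
           ++ fneg (brk (brk (prodF f a b))))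
    | _, _ => [:: (1, w ++ w')]
    end
  end.
Definition prodW (w w' : word X) : fsum k (word X) :=
  prodF (degW w + degW w') w w'.

(* N(X) (x) N(X), free on pairs of words *)
Definition tsum := fsum k (word X * word X).

Definition tprod (S S' : tsum) : tsum :=
  flatten (allpairs (fun P P' : k * (word X * word X) =>
    allpairs (fun q r : k * word X =>
       (P.1 * P'.1 * q.1 * r.1, (q.2, r.2)))
       (prodW P.2.1 P'.2.1) (prodW P.2.2 P'.2.2)) S S').

Definition tunit : tsum := [:: (1, ([::], [::]))].

Definition idN (S : tsum) : tsum :=
  map (fun P => (P.1, (P.2.1, [:: Lb P.2.2]))) S.

(* Delta on letters (elements of X |_| |_ X_infty _|) and on words via the
   diamond-factorization into letters *)
Fixpoint deltaL (l : letter X) : tsum :=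
  match l with
  | Lx x => [:: (1, ([::], [:: Lx x]))]
  | Lb a => idN ((fix dw (s : word X) : tsum :=
                   match s with
                   | [::] => tunit
                   | [:: l'] => deltaL l'
                   | l' :: s' => tprod (deltaL l') (dw s')
                   end) a)
  end.
Fixpoint deltaW (w : word X) : tsum :=
  match w with
  | [::] => tunit
  | [:: l] => deltaL l
  | l :: s => tprod (deltaL l) (deltaW s)
  end.

Definition deltaLin (a : fsum k (word X)) : tsum :=
  flatten (map (fun p => map (fun P => (p.1 * P.1, P.2)) (deltaW p.2)) a).

Definition inNdeg (n : nat) (a : fsum k (word X)) : Prop :=
  forall w, ~ (wfW w /\ degW w = n) -> coeff a w = 0.

Definition inTarget (n : nat) (S : tsum) : Prop :=
  forall u v : word X,
    ~ (wfW u /\ wfW v /\ (degW u + degW v)%N = n /\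
       (degW u = 0 \/ (0 < degW v)%N)) ->
    coeff S (u, v) = 0.

End Nijenhuis.

(* Main.v *)
Require Import Defs.
From mathcomp Require Import all_boot all_algebra.
From Stdlib Require Import ClassicalEpsilon.
From mathcomp Require Import zify.
Set Implicit Arguments. Unset Strict Implicit. Unset Printing Implicit Defensive.
Import GRing.Theory.

Section W.
Variable X : Type.
Implicit Types (a b c s t u w : word X) (l : letter X).

Definition headLb s := if s is l :: _ then isLb l else false.
Fixpoint lastLb s := match s with [::] => false | [:: l] => isLb l | _ :: s' => lastLb s' end.

Lemma noadj_cat s1 s2 :
  noadj (s1 ++ s2) <-> [/\ noadj s1, noadj s2 & ~~ (lastLb s1 && headLb s2)].
Proof.
elim: s1 => [|l s1 IH] /=; first by split => [H|[]].
case: s1 IH => [|l1 s1] IH.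
  rewrite /=. case: s2 {IH} => [|l2 s2] /=; first by rewrite andbF; split=> // _; split.
  split; first by case=> H1 H2; split.
  by case=> _ H2 H3; split.
change (~~ (isLb l && isLb l1) /\ noadj ((l1 :: s1) ++ s2) <->
  [/\ ~~ (isLb l && isLb l1) /\ noadj (l1 :: s1), noadj s2 & ~~ (lastLb (l1 :: s1) && headLb s2)]).
rewrite IH; split.
  by case=> H1 [H2 H3 H4]; split.
by case=> [[H1 H2] H3 H4]; split.
Qed.

Lemma allwf_cat s1 s2 : allwf (s1 ++ s2) <-> allwf s1 /\ allwf s2.
Proof. elim: s1 => [|l s1 IH] /=; [tauto | rewrite IH; tauto]. Qed.

Lemma degW_cat s1 s2 : degW (s1 ++ s2) = (degW s1 + degW s2)%N.
Proof. by elim: s1 => [|l s1 IH] //=; rewrite IH addnA. Qed.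

Lemma wfL_Lb a : wfL (Lb a) = wfW a.
Proof. rewrite /= /wfW; congr (_ /\ _); by elim: a => //= l a ->. Qed.

Lemma degL_Lb a : degL (Lb a) = (degW a).+1.
Proof. by rewrite /=; congr (_.+1); elim: a => //= l a ->. Qed.

Lemma degL_gt0 l : (0 < degL l)%N.
Proof. by case: l. Qed.

Lemma degW0 w : degW w = 0%N -> w = [::].
Proof. case: w => //= l w; have := degL_gt0 l; lia. Qed.

Lemma lastLb_rcons s l : lastLb (s ++ [:: l]) = isLb l.
Proof. elim: s => //= l1 s; case: s => //. Qed.

Lemma wfW_cat s1 s2 : wfW s1 -> wfW s2 -> ~~ (lastLb s1 && headLb s2) -> wfW (s1 ++ s2).
Proof. by rewrite /wfW allwf_cat noadj_cat => [[? ?] [? ?] ?]; split. Qed.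

Lemma wfW_catE s1 s2 : wfW (s1 ++ s2) -> [/\ wfW s1, wfW s2 & ~~ (lastLb s1 && headLb s2)].
Proof. by rewrite /wfW allwf_cat noadj_cat => [[[? ?] [? ? ?]]]. Qed.

Lemma wfW_single l : wfL l -> wfW [:: l].
Proof. by rewrite /wfW /=. Qed.

Lemma lastLb_rev w : lastLb w = headLb (rev w).
Proof. case/lastP: w => // s l; by rewrite rev_rcons -cats1 lastLb_rcons. Qed.

Lemma degW_Lb1 c : degW [:: Lb c] = (degW c).+1.
Proof. rewrite -degL_Lb; exact: addn0. Qed.

Lemma wfW_Lb1 c : wfW [:: Lb c] <-> wfW c.
Proof.
split => [[[H _] _]|H]; first by rewrite -wfL_Lb.
by split => //; split => //; rewrite wfL_Lb.
Qed.

Lemma wfW_mid u t c : wfW u -> wfW t -> ~~ lastLb u -> ~~ headLb t -> wfW c ->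
  wfW (u ++ [:: Lb c] ++ t).
Proof.
move=> Hu Ht Hl Hh Hc.
have H1 : wfW ([:: Lb c] ++ t).
  apply: wfW_cat => //; by apply/wfW_Lb1.
apply: (@wfW_cat u ([:: Lb c] ++ t)) => //.
by rewrite (negbTE Hl).
Qed.
End W.

Fixpoint allL {A} (P : A -> Prop) (s : seq A) : Prop :=
  match s with [::] => True | x :: s => P x /\ allL P s end.

Lemma allL_cat A (P : A -> Prop) s1 s2 : allL P (s1 ++ s2) <-> allL P s1 /\ allL P s2.
Proof. elim: s1 => [|x s1 IH] /=; [tauto | rewrite IH; tauto]. Qed.

Lemma allL_map A B (f : A -> B) (P : B -> Prop) s : allL P (map f s) <-> allL (fun x => P (f x)) s.
Proof. elim: s => [|x s IH] /=; [tauto | rewrite IH; tauto]. Qed.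

Lemma allL_impl A (P Q : A -> Prop) s : (forall x, P x -> Q x) -> allL P s -> allL Q s.
Proof. move=> H; elim: s => //= x s IH [? ?]; split; auto. Qed.

Lemma allL_flatten A (P : A -> Prop) ss : allL (allL P) ss -> allL P (flatten ss).
Proof. elim: ss => //= s ss IH [H1 H2]; apply/allL_cat; split; auto. Qed.

Lemma allL_allpairs A B C (f : A -> B -> C) (P : A -> Prop) (Q : B -> Prop) (R : C -> Prop) s t :
  (forall x y, P x -> Q y -> R (f x y)) -> allL P s -> allL Q t -> allL R (allpairs f s t).
Proof.
move=> H; elim: s => //= x s IH [Hx Hs] Ht.
apply/allL_cat; split; last by apply: IH.
by apply/allL_map; apply: allL_impl Ht => y; apply: H.
Qed.

Section P.
Variables (k : comPzRingType) (X : Type).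
Implicit Types (a b c s w t u : word X).

Lemma prodF_wf f w w' : (degW w + degW w' <= f)%N -> wfW w -> wfW w' ->
  allL (fun p => wfW p.2 /\ degW p.2 = (degW w + degW w')%N) (prodF k f w w').
Proof.
elim: f w w' => [|f IH] w w' Hd Hw Hw'.
  have E1 : w = [::] by apply: degW0; lia.
  have E2 : w' = [::] by apply: degW0; lia.
  by subst; split.
have Hfb : ~~ (lastLb w && headLb w') -> allL (fun p : k * word X => wfW p.2 /\ degW p.2 = (degW w + degW w')%N) [:: (1%R, w ++ w')].
  by move=> H; split=> //; split; [apply: wfW_cat | rewrite degW_cat].
rewrite /=.
case E1: (rev w) => [|[x|a] rw]; case E2: w' => [|[y|b] t];
  try (rewrite -E2; apply: Hfb; rewrite lastLb_rev E1 E2 //= ?andbF //; fail).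
have Ew : w = rev rw ++ [:: Lb a] by rewrite -[w]revK E1 rev_cons cats1.
subst w w'.
case/wfW_catE: Hw => Hrw /wfW_Lb1 Ha Hl.
have : wfW ([:: Lb b] ++ t) by [].
case/wfW_catE => /wfW_Lb1 Hb Ht Hh.
have Hl' : ~~ lastLb (rev rw) by move: Hl; rewrite andbT.
have Hd' : (degW a + degW b + 2 <= f.+1)%N.
  move: Hd; rewrite degW_cat degW_Lb1.
  change (degW (Lb b :: t)) with (degW ([:: Lb b] ++ t)); rewrite degW_cat degW_Lb1; lia.
have key : forall c, wfW c -> degW c = (degW a + degW b + 1)%N ->
   wfW (rev rw ++ [:: Lb c] ++ t) /\
   degW (rev rw ++ [:: Lb c] ++ t) = (degW (rev rw ++ [:: Lb a]) + degW (Lb b :: t))%N.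
  move=> c Hc Ec; split; first exact: wfW_mid.
  change (degW (Lb b :: t)) with (degW ([:: Lb b] ++ t)).
  rewrite !degW_cat !degW_Lb1 Ec; lia.
rewrite /wrap allL_map !allL_cat; split; [|split].
- rewrite /brk allL_map.
  have := IH [:: Lb a] b ltac:(rewrite degW_Lb1; lia) (proj2 (wfW_Lb1 a) Ha) Hb.
  apply: allL_impl => p [Hp Ep]; apply: key => //.
  by rewrite Ep degW_Lb1; lia.
- rewrite /brk allL_map.
  have := IH a [:: Lb b] ltac:(rewrite degW_Lb1; lia) Ha (proj2 (wfW_Lb1 b) Hb).
  apply: allL_impl => p [Hp Ep]; apply: key => //.
  by rewrite Ep degW_Lb1; lia.
- rewrite /fneg /brk !allL_map.
  have := IH a b ltac:(lia) Ha Hb.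
  apply: allL_impl => p [Hp Ep]; apply: key; first by apply/wfW_Lb1.
  by rewrite degW_Lb1 Ep; lia.
Qed.

Lemma prodW_wf w w' : wfW w -> wfW w' ->
  allL (fun p => wfW p.2 /\ degW p.2 = (degW w + degW w')%N) (prodW k w w').
Proof. by move=> Hw Hw'; apply: prodF_wf. Qed.

Definition PL n (uv : word X * word X) :=
  [/\ wfW uv.1, wfW uv.2, (degW uv.1 + degW uv.2)%N = n & (0 < degW uv.2)%N].

Lemma tprod_wf n1 n2 (S S' : tsum k X) :
  allL (fun P => PL n1 P.2) S -> allL (fun P => PL n2 P.2) S' ->
  allL (fun P => PL (n1 + n2) P.2) (tprod S S').
Proof.
move=> H1 H2; rewrite /tprod; apply: allL_flatten.
apply: allL_allpairs H1 H2 => P P' [Hu Hv Ed Hp] [Hu' Hv' Ed' Hp'].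
apply: allL_allpairs (prodW_wf Hu Hu') (prodW_wf Hv Hv') => q r [Hq Eq] [Hr Er].
split => //=; rewrite ?Eq ?Er; lia.
Qed.

Lemma idN_wf n (S : tsum k X) : allL (fun P => PL n P.2) S -> allL (fun P => PL n.+1 P.2) (idN S).
Proof.
move=> H; rewrite /idN allL_map; apply: allL_impl H => P [Hu Hv Ed Hp].
split; [exact: Hu | exact/wfW_Lb1 | by rewrite degW_Lb1 -Ed /= addnS | by rewrite degW_Lb1].
Qed.

Lemma deltaL_Lb a : deltaL k (Lb a) = idN (deltaW k a).
Proof.
rewrite /=; congr idN; elim: a => // l a IH; case: a IH => // l2 a IH.
Qed.

Lemma deltaW_wf_aux N :
  (forall l, (degL l <= N)%N -> allL (fun P => PL (degL l) P.2) (deltaL k l)) ->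
  forall w, w <> [::] -> (degW w <= N)%N -> allL (fun P => PL (degW w) P.2) (deltaW k w).
Proof.
move=> HL; elim => // l s IH _ Hd.
case: s IH Hd => [|l2 s] IH Hd.
  by rewrite /= addn0; apply: HL; move: Hd; rewrite /= addn0.
change (allL (fun P => PL (degL l + degW (l2 :: s)) P.2) (tprod (deltaL k l) (deltaW k (l2 :: s)))).
move: Hd; change (degW (l :: l2 :: s)) with (degL l + degW (l2 :: s))%N => Hd.
apply: tprod_wf; first by apply: HL; lia.
by apply: IH => //; lia.
Qed.

Lemma deltaL_wf N l : (degL l <= N)%N -> allL (fun P => PL (degL l) P.2) (deltaL k l).
Proof.
elim: N l => [|N IH] l Hd; first by have := degL_gt0 l; lia.
case: l Hd => [x|a] Hd.
  split => //; split => //.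
case: a Hd => [|l a] Hd.
  rewrite deltaL_Lb degL_Lb; split => //; split => //; apply/wfW_Lb1.
rewrite deltaL_Lb degL_Lb; apply: idN_wf.
apply: (@deltaW_wf_aux N IH) => //.
by move: Hd; rewrite degL_Lb.
Qed.

Definition TT n (uv : word X * word X) :=
  wfW uv.1 /\ wfW uv.2 /\ (degW uv.1 + degW uv.2)%N = n /\
       (degW uv.1 = 0%N \/ (0 < degW uv.2)%N).

Lemma deltaW_T w : allL (fun P => TT (degW w) P.2) (deltaW k w).
Proof.
case: w => [|l s]; first by split => //; split => //; split => //; split => //; left.
apply: allL_impl (deltaW_wf_aux (fun l' => @deltaL_wf _ l') _ (leqnn _)) => //.
by move=> P [? ? ? ?]; split => //; split => //; split => //; right.
Qed.
End P.

Section C.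
Variables (k : comPzRingType) (T : Type).
Local Open Scope ring_scope.

Lemma coeff_cons (p : k * T) s t :
  coeff (p :: s) t = (if excluded_middle_informative (p.2 = t) then p.1 else 0) + coeff s t.
Proof. by rewrite /coeff big_cons. Qed.

Lemma coeff_cat (s1 s2 : fsum k T) t : coeff (s1 ++ s2) t = coeff s1 t + coeff s2 t.
Proof. by rewrite /coeff big_cat. Qed.

Lemma coeff_allL (P : T -> Prop) (s : fsum k T) t :
  allL (fun p => P p.2) s -> ~ P t -> coeff s t = 0.
Proof.
elim: s => [|p s IH]; first by rewrite /coeff big_nil.
move=> [Hp Hs] Ht.
rewrite coeff_cons IH // addr0; case: excluded_middle_informative => // E.
by case: Ht; rewrite -E.
Qed.

Lemma coeff_scale (c : k) (s : fsum k T) t :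
  coeff (map (fun P => (c * P.1, P.2)) s) t = c * coeff s t.
Proof.
rewrite /coeff big_map mulr_sumr; apply: eq_bigr => p _ /=.
by case: excluded_middle_informative => H; rewrite ?mulr0.
Qed.

Lemma group (F : T -> k) n (a : fsum k T) : (size a <= n)%N ->
  (forall w, coeff a w = 0 \/ F w = 0) -> \sum_(p <- a) p.1 * F p.2 = 0.
Proof.
elim: n a => [|n IH] [|p0 a] //= Hs H; rewrite ?big_nil //.
pose b := fun p : k * T => if excluded_middle_informative (p.2 = p0.2) then true else false.
rewrite (bigID b) /=.
have E1 : \sum_(p <- p0 :: a | b p) p.1 * F p.2 = coeff (p0 :: a) p0.2 * F p0.2.
  rewrite big_mkcond /coeff mulr_suml; apply: eq_bigr => p _; rewrite /b.
  by case: excluded_middle_informative => E /=; [rewrite E | rewrite mul0r].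
have Ef : forall (s : fsum k T) w, coeff (filter (fun p => ~~ b p) s) w =
    if excluded_middle_informative (w = p0.2) then 0 else coeff s w.
  move=> s w; rewrite /coeff big_filter.
  case: excluded_middle_informative => [Hw|Hw]; first subst w.
    by apply: big1 => p; rewrite /b; case: excluded_middle_informative.
  rewrite [in RHS](bigID b) /= [X in _ = X + _]big1 ?add0r // => p; rewrite /b.
  case: excluded_middle_informative => // E _.
  by case: excluded_middle_informative => // E'; case: Hw; rewrite -E' E.
rewrite E1 -big_filter IH.
- by case: (H p0.2) => ->; rewrite ?mul0r ?mulr0 ?add0r.
- have Hb0 : b p0 = true by rewrite /b; case: excluded_middle_informative => // [] [].
  by rewrite /= Hb0 /= size_filter; apply: leq_trans (count_size _ _) Hs.
- move=> w; rewrite Ef; case: excluded_middle_informative => Hw; [by left | exact: H].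
Qed.
End C.

Lemma coeff_deltaLin (k : comPzRingType) X (a : fsum k (word X)) t :
  coeff (deltaLin a) t = (\sum_(p <- a) p.1 * coeff (deltaW k p.2) t)%R.
Proof.
elim: a => [|p a IH]; first by rewrite /coeff !big_nil.
rewrite /deltaLin /= coeff_cat coeff_scale big_cons; congr (_ + _)%R; exact: IH.
Qed.

Theorem mainTheorem10 (k : comPzRingType) (X : Type) (n : nat)
    (a : fsum k (word X)) :
  inNdeg n a -> inTarget n (deltaLin a).
Proof.
move=> Ha u v Hnot; rewrite coeff_deltaLin.
apply: (@group k (word X) (fun w => coeff (deltaW k w) (u, v)) (size a)) => // w.
case: (eqVneq (degW w) n) => [Ew|Ew].
  right; apply: (coeff_allL (P := TT (degW w))); first exact: deltaW_T.
  by rewrite Ew.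
by left; apply: Ha => -[_ E]; rewrite E eqxx in Ew.
Qed.
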